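(* In the common-ownership game below, there is no ownership structure $\mathbf K$ and no equilibrium $(\mathbf A^*,\mathbf q^* )$ such that $\mathbf A^*\mathbf q^*=\boldsymbol\beta$ and $\mathbf q^*=\boldsymbol\gamma$.
   Context: Model: integers $n\ge2$, $m\ge2$; $\alpha>0$, $\boldsymbol\beta\in\mathbb R^m$ with $\|\boldsymbol\beta\|_2=1$, $\boldsymbol\gamma\in\mathbb R^n$ with all $\gamma_i>0$. Firm $i$ chooses a unit vector $\mathbf a_i\in\mathbb R^m$ and $q_i\ge0$; $\mathbf A=[\mathbf a_1,\dots,\mathbf a_n]$. Standalone profit: $\Pi_i=\alpha q_i\mathbf a_i^\top(\boldsymbol\beta-\sum_{j\ne i}q_j\mathbf a_j)-(1+\alpha)q_i^2+\gamma_iq_i$. An ownership structure is an $n\times n$ matrix $\mathbf K=[\kappa_{ij}]$ with nonnegative entries, $\kappa_{ii}=1$, and $(\mathbf K+\mathbf K^\top)/2$ positive semidefinite. Firm $i$ maximizes $\tilde\Pi_i=\Pi_i+\sum_{j\ne i}\kappa_{ij}\Pi_j$; an equilibrium is a profile $(\mathbf A^*,\mathbf q^* )$ in which each $(\mathbf a_i^*,q_i^* )$ maximizes $\tilde\Pi_i$ over unit $\mathbf a_i$, $q_i\ge0$ given the others' choices. *)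

(* Defs.v *)
From HB Require Import structures.
From mathcomp Require Import all_boot all_order all_algebra.
From mathcomp Require Import reals.
Set Implicit Arguments. Unset Strict Implicit. Unset Printing Implicit Defensive.
Import Order.TTheory GRing.Theory Num.Theory.
Local Open Scope ring_scope.

Section Game.
Variable R : realType.

Definition unit_vec (m : nat) (a : 'cV[R]_m) : Prop := (a^T *m a) 0 0 = 1.

Definition profit (n m : nat) (alpha : R) (beta : 'cV[R]_m) (gamma : 'cV[R]_n)
  (A : 'M[R]_(m, n)) (q : 'cV[R]_n) (i : 'I_n) : R :=
  alpha * q i 0 * ((col i A)^T *m (beta - \sum_(j < n | j != i) q j 0 *: col j A)) 0 0
  - (1 + alpha) * q i 0 ^+ 2 + gamma i 0 * q i 0.

Definition ownership (n : nat) (K : 'M[R]_n) : Prop :=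
  (forall i j, 0 <= K i j) /\ (forall i, K i i = 1) /\
  (forall x : 'cV[R]_n, 0 <= (x^T *m ((2%:R)^-1 *: (K + K^T)) *m x) 0 0).

Definition obj (n m : nat) (alpha : R) (beta : 'cV[R]_m) (gamma : 'cV[R]_n)
  (K : 'M[R]_n) (A : 'M[R]_(m, n)) (q : 'cV[R]_n) (i : 'I_n) : R :=
  profit alpha beta gamma A q i +
  \sum_(j < n | j != i) K i j * profit alpha beta gamma A q j.

Definition dev_A (n m : nat) (A : 'M[R]_(m, n)) (i : 'I_n) (a : 'cV[R]_m) : 'M[R]_(m, n) :=
  \matrix_(k, j) (if j == i then a k 0 else A k j).
Definition dev_q (n : nat) (q : 'cV[R]_n) (i : 'I_n) (t : R) : 'cV[R]_n :=
  \col_j (if j == i then t else q j 0).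

Definition equilibrium (n m : nat) (alpha : R) (beta : 'cV[R]_m) (gamma : 'cV[R]_n)
  (K : 'M[R]_n) (A : 'M[R]_(m, n)) (q : 'cV[R]_n) : Prop :=
  (forall i, unit_vec (col i A)) /\ (forall i, 0 <= q i 0) /\
  (forall i (a : 'cV[R]_m) (t : R), unit_vec a -> 0 <= t ->
     obj alpha beta gamma K (dev_A A i a) (dev_q q i t) i
     <= obj alpha beta gamma K A q i).

End Game.

(* Main.v *)
Require Import Defs.
From HB Require Import structures.
From mathcomp Require Import all_boot all_order all_algebra.
From mathcomp Require Import reals.
From mathcomp Require Import ring lra.
Import Order.TTheory GRing.Theory Num.Theory.
Set Implicit Arguments. Unset Strict Implicit. Unset Printing Implicit Defensive.
Local Open Scope ring_scope.

Definition gg (R : realType) (m n : nat) (A : 'M[R]_(m, n)) (j k : 'I_n) : R :=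
  \sum_l A l j * A l k.

Lemma profitE (R : realType) (n m : nat) (alpha : R) (beta : 'cV[R]_m) (gamma : 'cV[R]_n)
  (A : 'M[R]_(m, n)) (q : 'cV[R]_n) (j : 'I_n) :
  profit alpha beta gamma A q j =
  alpha * q j 0 * (\sum_l A l j * beta l 0 - \sum_(k < n | k != j) q k 0 * gg A j k)
  - (1 + alpha) * q j 0 ^+ 2 + gamma j 0 * q j 0.
Proof.
rewrite /profit; congr (_ * _ - _ + _).
rewrite mxE.
under eq_bigr => l _ do rewrite !mxE summxE mulrBr.
rewrite sumrB; congr (_ - _).
under eq_bigr => l _ do rewrite big_distrr.
rewrite exchange_big /=; apply: eq_bigr => k _.
rewrite /gg big_distrr /=; apply: eq_bigr => l _.
by rewrite !mxE; ring.
Qed.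

Lemma qfE (R : realType) (n : nat) (M : 'M[R]_n) (x : 'cV[R]_n) :
  (x^T *m M *m x) 0 0 = \sum_i \sum_j x i 0 * M i j * x j 0.
Proof.
rewrite mxE; under eq_bigr => j _ do rewrite mxE big_distrl.
rewrite exchange_big; apply: eq_bigr => i _; apply: eq_bigr => j _.
by rewrite mxE.
Qed.

Lemma psdK (R : realType) (n : nat) (K : 'M[R]_n) (x : 'cV[R]_n) :
  ownership K -> 0 <= \sum_i \sum_j x i 0 * K i j * x j 0.
Proof.
move=> [_ [_ H]]; have := H x; rewrite qfE.
have E1 : \sum_i \sum_j x i 0 * K j i * x j 0 = \sum_i \sum_j x i 0 * K i j * x j 0.
  rewrite exchange_big; apply: eq_bigr => i _; apply: eq_bigr => j _; ring.
have -> : \sum_i \sum_j x i 0 * ((2%:R)^-1 *: (K + K^T)) i j * x j 0 =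
  (2%:R)^-1 * ((\sum_i \sum_j x i 0 * K i j * x j 0) + (\sum_i \sum_j x i 0 * K j i * x j 0)).
  rewrite -big_split mulr_sumr; apply: eq_bigr => i _.
  rewrite -big_split mulr_sumr; apply: eq_bigr => j _.
  by rewrite !mxE /=; ring.
rewrite E1 => h; nra.
Qed.

Lemma dev_qE (R : realType) (n : nat) (q : 'cV[R]_n) i t k :
  dev_q q i t k 0 = q k 0 + (k == i)%:R * (t - q i 0).
Proof. by rewrite mxE; case: eqP => [->|_]; rewrite ?mul1r ?mul0r; ring. Qed.

Lemma dev_q_id (R : realType) (n : nat) (q : 'cV[R]_n) i : dev_q q i (q i 0) = q.
Proof. by apply/matrixP => k l; rewrite (ord1 l) dev_qE subrr mulr0 addr0. Qed.

Lemma dev_A_id (R : realType) (m n : nat) (A : 'M[R]_(m, n)) i : dev_A A i (col i A) = A.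
Proof. by apply/matrixP => k j; rewrite !mxE; case: eqP => // ->. Qed.

Lemma sum_dev (R : realType) (m n : nat) (A : 'M[R]_(m, n)) (q : 'cV[R]_n) i t j :
  \sum_(k < n | k != j) dev_q q i t k 0 * gg A j k =
  \sum_(k < n | k != j) q k 0 * gg A j k + (j != i)%:R * ((t - q i 0) * gg A j i).
Proof.
under eq_bigr => k _ do rewrite dev_qE mulrDl.
rewrite big_split /=; congr (_ + _).
case: eqP => [->|/eqP ji].
  rewrite mul0r big1 // => k /negPf ->; by rewrite !mul0r.
rewrite (bigD1 i) 1?eq_sym //= eqxx mul1r big1 ?addr0 ?mul1r //.
by move=> k /andP [_ /negPf ->]; rewrite !mul0r.
Qed.

Lemma objdev (R : realType) (n m : nat) (alpha : R) (beta : 'cV[R]_m) (gamma : 'cV[R]_n)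
  (K : 'M[R]_n) (A : 'M[R]_(m, n)) i t :
  (forall j, \sum_l A l j * beta l 0 - \sum_(k < n | k != j) gamma k 0 * gg A j k = gamma j 0) ->
  obj alpha beta gamma K A (dev_q gamma i t) i =
  alpha * t * gamma i 0 - (1 + alpha) * t ^+ 2 + gamma i 0 * t
  + \sum_(j < n | j != i) K i j * (alpha * gamma j 0 * gamma j 0 - (1 + alpha) * gamma j 0 ^+ 2
        + gamma j 0 * gamma j 0)
  - alpha * (t - gamma i 0) * \sum_(j < n | j != i) K i j * gamma j 0 * gg A j i.
Proof.
move=> hb; rewrite /obj profitE sum_dev eqxx /= mulr0n mul0r addr0 hb.
rewrite dev_qE eqxx mul1r.
have -> : gamma i 0 + (t - gamma i 0) = t by ring.
rewrite mulr_sumr -[RHS]addrA -sumrB; congr (_ + _); apply: eq_bigr => j ji.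
rewrite profitE sum_dev ji /= mulr1n mul1r dev_qE (negPf ji) /= mulr0n mul0r addr0.
have -> : forall a b c : R, a - (b + c) = a - b - c by move=> *; ring.
rewrite hb; ring.
Qed.

Lemma foc (R : realType) (n m : nat) (alpha : R) (beta : 'cV[R]_m) (gamma : 'cV[R]_n)
  (K : 'M[R]_n) (A : 'M[R]_(m, n)) i :
  0 < alpha -> 0 < gamma i 0 -> gg A i i = 1 -> K i i = 1 ->
  (forall j, \sum_l A l j * beta l 0 - \sum_(k < n | k != j) gamma k 0 * gg A j k = gamma j 0) ->
  (forall t, 0 <= t -> obj alpha beta gamma K A (dev_q gamma i t) i <= obj alpha beta gamma K A gamma i) ->
  alpha * \sum_j K i j * gamma j 0 * gg A j i <= - (gamma i 0 / 2).
Proof.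
move=> ha hg hgg hK hb Hdev.
rewrite (bigD1 i) //= hK hgg mul1r mulr1.
set T := \sum_(j < n | j != i) _.
set g := gamma i 0 in hg *.
pose e := g / (2 * (1 + alpha)).
have he : e * (2 * (1 + alpha)) = g by rewrite /e mulfVK // lt0r_neq0 //; lra.
have epos : 0 < e by rewrite /e divr_gt0 //; lra.
have ht : 0 <= g - e by nra.
have H1 := Hdev _ ht.
have H3 := @objdev R n m alpha beta gamma K A i g hb; rewrite dev_q_id in H3.
rewrite H3 (@objdev R n m alpha beta gamma K A i (g - e) hb) -/T -/g in H1.
have H4 : e * ((1 + alpha) * g - (1 + alpha) * e + alpha * T) <= 0 by nra.
have H5 : (1 + alpha) * g - (1 + alpha) * e + alpha * T <= 0.
  by move: H4; rewrite pmulr_rle0.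
nra.
Qed.

Unset Implicit Arguments.
Theorem corollary2 (R : realType) (n m : nat) (alpha : R)
  (beta : 'cV[R]_m) (gamma : 'cV[R]_n) :
  (2 <= n)%N -> (2 <= m)%N -> 0 < alpha -> unit_vec beta ->
  (forall i, 0 < gamma i 0) ->
  ~ (exists (K : 'M[R]_n) (A : 'M[R]_(m, n)) (q : 'cV[R]_n),
       ownership K /\ equilibrium alpha beta gamma K A q /\
       A *m q = beta /\ q = gamma).
Proof.
move=> hn _ ha _ hg [K [A [q [hK [[Aunit [_ Hdev]] [HAq Hq]]]]]].
subst q beta.
have hgg : forall i, gg A i i = 1.
  move=> i; rewrite -(Aunit i) mxE /gg; apply: eq_bigr => l _; by rewrite !mxE.
have hb : forall j, \sum_l A l j * (A *m gamma) l 0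
    - \sum_(k < n | k != j) gamma k 0 * gg A j k = gamma j 0.
  move=> j.
  have -> : \sum_l A l j * (A *m gamma) l 0 = \sum_k gamma k 0 * gg A j k.
    under eq_bigr => l _ do rewrite mxE big_distrr.
    rewrite exchange_big; apply: eq_bigr => k _; rewrite /gg mulr_sumr.
    by apply: eq_bigr => l _ /=; ring.
  by rewrite (bigD1 j) //= hgg mulr1 addrK.
have Hi : forall i, alpha * \sum_j K i j * gamma j 0 * gg A j i <= - (gamma i 0 / 2).
  move=> i; apply: foc => //.
  - by case: hK => _ [].
  - move=> t ht; have := Hdev i (col i A) t (Aunit i) ht; by rewrite dev_A_id.
have Hpsd : 0 <= \sum_i \sum_j gamma i 0 * K i j * gamma j 0 * gg A j i.
  have -> : \sum_i \sum_j gamma i 0 * K i j * gamma j 0 * gg A j i =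
     \sum_l \sum_i \sum_j (\col_k (gamma k 0 * A l k)) i 0 * K i j
                          * (\col_k (gamma k 0 * A l k)) j 0.
    rewrite [RHS]exchange_big; apply: eq_bigr => i _.
    rewrite [RHS]exchange_big; apply: eq_bigr => j _.
    rewrite /gg mulr_sumr; apply: eq_bigr => l _; rewrite !mxE; ring.
  by apply: sumr_ge0 => l _; apply: psdK.
have Hsum : \sum_i gamma i 0 * (alpha * \sum_j K i j * gamma j 0 * gg A j i)
          <= \sum_i gamma i 0 * (- (gamma i 0 / 2)).
  apply: ler_sum => i _; apply: ler_wpM2l; [exact: ltW | exact: Hi].
have E : \sum_i gamma i 0 * (alpha * \sum_j K i j * gamma j 0 * gg A j i) =
   alpha * \sum_i \sum_j gamma i 0 * K i j * gamma j 0 * gg A j i.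
  rewrite mulr_sumr; apply: eq_bigr => i _; rewrite !mulr_sumr.
  by apply: eq_bigr => j _; ring.
have i0 : 'I_n by exists 0%N; exact: leq_trans hn.
have Hneg : \sum_i gamma i 0 * (- (gamma i 0 / 2)) < 0.
  rewrite (bigD1 i0) //=.
  have : \sum_(i < n | i != i0) gamma i 0 * (- (gamma i 0 / 2)) <= 0.
    apply: sumr_le0 => i _; have := hg i; nra.
  have := hg i0; nra.
rewrite E in Hsum.
have : 0 <= alpha * \sum_i \sum_j gamma i 0 * K i j * gamma j 0 * gg A j i.
  by apply: mulr_ge0 => //; exact: ltW.
lra.
Qed.
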